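(* Let $b_1,b_2,b_3\in\mathbb R$, not all zero, with $b_1+b_2+b_3=0$. Set \[a_1=\tfrac1{\sqrt3}(b_3-b_2),\quad a_2=\tfrac1{\sqrt3}(b_1-b_3),\quad a_3=\tfrac1{\sqrt3}(b_2-b_1).\] Let $w_1,w_2,w_3:\mathbb R\to\mathbb C\setminus\{0\}$ be differentiable functions satisfying, for all $t$, \[\frac{dw_1}{dt}=a_1\overline{w_2w_3},\quad\frac{dw_2}{dt}=a_2\overline{w_3w_1},\quad\frac{dw_3}{dt}=a_3\overline{w_1w_2},\] \[|w_1|^2+|w_2|^2+|w_3|^2=3,\qquad b_1|w_1|^2+b_2|w_2|^2+b_3|w_3|^2=0.\] Define $\Phi:\mathbb R^2\to\mathcal S^5$ by \[\Phi(s,t)=\tfrac1{\sqrt3}\bigl(e^{ib_1s}w_1(t),e^{ib_2s}w_2(t),e^{ib_3s}w_3(t)\bigr).\] Then $\Phi$ is a conformal harmonic map.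
   Context: $\mathcal S^5$ is the unit sphere in $\mathbb C^3$ with the round metric. Conformal means that $\partial\Phi/\partial s$ and $\partial\Phi/\partial t$ are orthogonal and of equal length at every point. *)

(* Defs.v *)
From Stdlib Require Import Reals.
From Coquelicot Require Import Coquelicot.
Open Scope R_scope.

Definition cinner (u v : C) : R := fst u * fst v + snd u * snd v.

(* A map R^2 -> C^3 is given by its three components F1 F2 F3 : R -> R -> C. *)
Definition inner3 (u1 u2 u3 v1 v2 v3 : C) : R :=
  cinner u1 v1 + cinner u2 v2 + cinner u3 v3.

Definition maps_into_S5 (F1 F2 F3 : R -> R -> C) : Prop :=
  forall s t, Cmod (F1 s t) ^ 2 + Cmod (F2 s t) ^ 2 + Cmod (F3 s t) ^ 2 = 1.

Definition has_partials (F Fs Ft : R -> R -> C) : Prop :=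
  forall s t, is_derive (fun s' => F s' t) s (Fs s t) /\
              is_derive (fun t' => F s t') t (Ft s t).

Definition conformal_map (F1 F2 F3 : R -> R -> C) : Prop :=
  exists F1s F1t F2s F2t F3s F3t : R -> R -> C,
    has_partials F1 F1s F1t /\ has_partials F2 F2s F2t /\
    has_partials F3 F3s F3t /\
    forall s t,
      inner3 (F1s s t) (F2s s t) (F3s s t) (F1t s t) (F2t s t) (F3t s t) = 0 /\
      inner3 (F1s s t) (F2s s t) (F3s s t) (F1s s t) (F2s s t) (F3s s t) =
      inner3 (F1t s t) (F2t s t) (F3t s t) (F1t s t) (F2t s t) (F3t s t).

Definition has_second_partials (F Fss Ftt : R -> R -> C) : Prop :=
  exists Fs Ft : R -> R -> C, has_partials F Fs Ft /\
    forall s t, is_derive (fun s' => Fs s' t) s (Fss s t) /\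
                is_derive (fun t' => Ft s t') t (Ftt s t).

(* Harmonic map from flat R^2 into the round S^5 ⊂ R^6: the tension field,
   i.e. the tangential part of the Euclidean Laplacian  L = Phi_ss + Phi_tt,
   vanishes:  L - <L, Phi> Phi = 0. *)
Definition harmonic_map_S5 (F1 F2 F3 : R -> R -> C) : Prop :=
  maps_into_S5 F1 F2 F3 /\
  exists F1ss F1tt F2ss F2tt F3ss F3tt : R -> R -> C,
    has_second_partials F1 F1ss F1tt /\ has_second_partials F2 F2ss F2tt /\
    has_second_partials F3 F3ss F3tt /\
    forall s t,
      let L1 := Cplus (F1ss s t) (F1tt s t) in
      let L2 := Cplus (F2ss s t) (F2tt s t) in
      let L3 := Cplus (F3ss s t) (F3tt s t) in
      let k := inner3 L1 L2 L3 (F1 s t) (F2 s t) (F3 s t) in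
      Cminus L1 (Cmult (RtoC k) (F1 s t)) = RtoC 0 /\
      Cminus L2 (Cmult (RtoC k) (F2 s t)) = RtoC 0 /\
      Cminus L3 (Cmult (RtoC k) (F3 s t)) = RtoC 0.

Definition cexp_i (x : R) : C := (cos x, sin x).
Definition Phi_comp (b : R) (w : R -> C) : R -> R -> C :=
  fun s t => Cmult (RtoC (/ sqrt 3)) (Cmult (cexp_i (b * s)) (w t)).

(* Main.v *)
Require Import Defs.
From Stdlib Require Import Reals Lra.
From Coquelicot Require Import Coquelicot.
Open Scope R_scope.

Lemma is_derive_C (f : R -> C) x (l : C) :
  is_derive (fun y => fst (f y)) x (fst l) ->
  is_derive (fun y => snd (f y)) x (snd l) ->
  is_derive f x l.
Proof.
intros H1 H2.
unfold is_derive in *.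
apply (filterdiff_ext_lin _ (fun y : R => (scal y (fst l), scal y (snd l)))).
2: { intros y. destruct l. reflexivity. }
apply (filterdiff_ext (fun y => (fst (f y), snd (f y)))).
{ intros y. destruct (f y); reflexivity. }
apply (filterdiff_comp_2 (fun y => fst (f y)) (fun y => snd (f y)) (fun a b => (a,b)) _ _ (fun a b => (a,b)) H1 H2).
apply filterdiff_linear.
apply is_linear_prod; [apply is_linear_fst | apply is_linear_snd].
Qed.
Lemma is_derive_C_fst (f : R -> C) x (l : C) :
  is_derive f x l -> is_derive (fun y => fst (f y)) x (fst l).
Proof.
intros H. unfold is_derive in *.
apply (filterdiff_ext_lin _ (fun y : R => fst (scal y l))).
2: { intros y. destruct l. reflexivity. }
apply (filterdiff_comp f (fun c : C => fst c) _ _ H).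
apply filterdiff_linear. apply (@is_linear_fst R_AbsRing R_NormedModule R_NormedModule).
Qed.
Lemma is_derive_C_snd (f : R -> C) x (l : C) :
  is_derive f x l -> is_derive (fun y => snd (f y)) x (snd l).
Proof.
intros H. unfold is_derive in *.
apply (filterdiff_ext_lin _ (fun y : R => snd (scal y l))).
2: { intros y. destruct l. reflexivity. }
apply (filterdiff_comp f (fun c : C => snd c) _ _ H).
apply filterdiff_linear. apply (@is_linear_snd R_AbsRing R_NormedModule R_NormedModule).
Qed.

Lemma is_derive_val {V : NormedModule R_AbsRing} (f : R -> V) x l l' :
  is_derive f x l -> l = l' -> is_derive f x l'.
Proof. intros H <-; exact H. Qed.

Ltac Ceq := apply injective_projections; simpl; ring.

Lemma is_derive_Cmult (f g : R -> C) x df dg :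
  is_derive f x df -> is_derive g x dg ->
  is_derive (fun y => Cmult (f y) (g y)) x (Cplus (Cmult df (g x)) (Cmult (f x) dg)).
Proof.
intros Hf Hg.
pose proof (is_derive_C_fst _ _ _ Hf) as Hf1.
pose proof (is_derive_C_snd _ _ _ Hf) as Hf2.
pose proof (is_derive_C_fst _ _ _ Hg) as Hg1.
pose proof (is_derive_C_snd _ _ _ Hg) as Hg2.
apply is_derive_C.
- change (is_derive (fun y => fst (f y) * fst (g y) - snd (f y) * snd (g y)) x
    (fst (Cplus (Cmult df (g x)) (Cmult (f x) dg)))).
  eapply is_derive_val.
  + apply (is_derive_minus (V:=R_NormedModule)); (apply (is_derive_mult (K:=R_AbsRing)); [eassumption|eassumption|intros; apply Rmult_comm]).
  + unfold minus, plus, mult, opp; simpl. ring.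
- change (is_derive (fun y => fst (f y) * snd (g y) + snd (f y) * fst (g y)) x
    (snd (Cplus (Cmult df (g x)) (Cmult (f x) dg)))).
  eapply is_derive_val.
  + apply (is_derive_plus (V:=R_NormedModule)); (apply (is_derive_mult (K:=R_AbsRing)); [eassumption|eassumption|intros; apply Rmult_comm]).
  + unfold minus, plus, mult, opp; simpl. ring.
Qed.

Lemma is_derive_Cconj (f : R -> C) x df :
  is_derive f x df -> is_derive (fun y => Cconj (f y)) x (Cconj df).
Proof.
intros Hf.
pose proof (is_derive_C_fst _ _ _ Hf) as Hf1.
pose proof (is_derive_C_snd _ _ _ Hf) as Hf2.
apply is_derive_C.
- exact Hf1.
- change (is_derive (fun y => opp (snd (f y))) x (opp (snd df))).
  apply (is_derive_opp (V:=R_NormedModule)); auto.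
Qed.

Lemma is_derive_Cconst (c : C) x : is_derive (fun _ : R => c) x (RtoC 0).
Proof.
apply is_derive_C; simpl; apply (is_derive_const (V:=R_NormedModule)).
Qed.

Lemma is_derive_cexp (b s : R) :
  is_derive (fun s => cexp_i (b*s)) s (Cmult (0,b) (cexp_i (b*s))).
Proof.
apply is_derive_C; simpl.
- auto_derive. auto. ring.
- auto_derive. auto. ring.
Qed.

Definition Fs (b:R) (w:R->C) (s t : R) : C :=
  Cmult (RtoC (/sqrt 3)) (Cmult (cexp_i (b*s)) (Cmult (0,b) (w t))).
Definition Ft (b:R) (w':R->C) (s t : R) : C :=
  Cmult (RtoC (/sqrt 3)) (Cmult (cexp_i (b*s)) (w' t)).

Lemma partials b w w' : (forall t, is_derive w t (w' t)) ->
  has_partials (Phi_comp b w) (Fs b w) (Ft b w').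
Proof.
intros Hw s t; split; unfold Phi_comp.
- eapply is_derive_val.
  + apply (is_derive_Cmult (fun _ => RtoC (/sqrt 3)) (fun s' => Cmult (cexp_i (b*s')) (w t))).
    * apply is_derive_Cconst.
    * apply (is_derive_Cmult (fun s' => cexp_i (b*s')) (fun _ => w t)).
      -- apply is_derive_cexp.
      -- apply is_derive_Cconst.
  + unfold Fs; Ceq.
- eapply is_derive_val.
  + apply (is_derive_Cmult (fun _ => RtoC (/sqrt 3)) (fun t' => Cmult (cexp_i (b*s)) (w t'))).
    * apply is_derive_Cconst.
    * apply (is_derive_Cmult (fun _ => cexp_i (b*s)) w).
      -- apply is_derive_Cconst.
      -- apply Hw.
  + unfold Ft; Ceq.
Qed.

Lemma second b w w' w'' : (forall t, is_derive w t (w' t)) ->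
  (forall t, is_derive w' t (w'' t)) ->
  has_second_partials (Phi_comp b w)
    (fun s t => Cmult (RtoC (-b^2)) (Phi_comp b w s t)) (Ft b w'').
Proof.
intros Hw Hw'. exists (Fs b w), (Ft b w'). split; [apply partials; auto|].
intros s t; split; unfold Fs, Ft, Phi_comp.
- eapply is_derive_val.
  + apply (is_derive_Cmult (fun _ => RtoC (/sqrt 3)) (fun s' => Cmult (cexp_i (b*s')) (Cmult (0,b) (w t)))).
    * apply is_derive_Cconst.
    * apply (is_derive_Cmult (fun s' => cexp_i (b*s')) (fun _ => Cmult (0,b) (w t))).
      -- apply is_derive_cexp.
      -- apply is_derive_Cconst.
  + Ceq.
- eapply is_derive_val.
  + apply (is_derive_Cmult (fun _ => RtoC (/sqrt 3)) (fun t' => Cmult (cexp_i (b*s)) (w' t'))).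
    * apply is_derive_Cconst.
    * apply (is_derive_Cmult (fun _ => cexp_i (b*s)) w').
      -- apply is_derive_Cconst.
      -- apply Hw'.
  + Ceq.
Qed.

Lemma rot_inner c th u v :
  cinner (Cmult (RtoC c) (Cmult (cexp_i th) u)) (Cmult (RtoC c) (Cmult (cexp_i th) v))
  = c*c*cinner u v.
Proof.
destruct u as [u1 u2], v as [v1 v2]; unfold cinner, cexp_i, RtoC; simpl.
pose proof (sin2_cos2 th) as H; unfold Rsqr in H.
transitivity (c*c*((sin th * sin th + cos th * cos th) * (u1*v1 + u2*v2))); [ring|].
rewrite H; ring.
Qed.

Lemma Cmod2 u : Cmod u ^ 2 = cinner u u.
Proof.
unfold Cmod, cinner. rewrite pow2_sqrt. ring.
destruct u; simpl; nra.
Qed.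

Lemma r2 : / sqrt 3 * / sqrt 3 = / 3.
Proof.
rewrite <- Rinv_mult. rewrite sqrt_sqrt; lra.
Qed.

Lemma lam_eq (b1 b2 b3 x1 x2 x3 : R) :
  b1+b2+b3=0 -> x1+x2+x3=3 -> b1*x1+b2*x2+b3*x3=0 ->
  -b1^2 + /3*((b3-b2)*(b1-b3)*x3 + (b3-b2)*(b2-b1)*x2) =
  -b2^2 + /3*((b1-b3)*(b2-b1)*x1 + (b1-b3)*(b3-b2)*x3).
Proof.
intros HB HT HS.
assert (H : (-b1^2 + /3*((b3-b2)*(b1-b3)*x3 + (b3-b2)*(b2-b1)*x2)) -
  (-b2^2 + /3*((b1-b3)*(b2-b1)*x1 + (b1-b3)*(b3-b2)*x3)) =
  (b2-b1)/3*(3*(b1+b2+b3) + b3*(x1+x2+x3-3) - (b1*x1+b2*x2+b3*x3))) by field.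
rewrite HB, HT, HS in H. lra.
Qed.

Lemma conf_eq (b1 b2 b3 x1 x2 x3 : R) :
  x1+x2+x3=3 -> b1*x1+b2*x2+b3*x3=0 ->
  b1^2*x1+b2^2*x2+b3^2*x3 =
  /3*((b3-b2)^2*x2*x3 + (b1-b3)^2*x3*x1 + (b2-b1)^2*x1*x2).
Proof.
intros HT HS.
assert (H : (b3-b2)^2*x2*x3 + (b1-b3)^2*x3*x1 + (b2-b1)^2*x1*x2 =
  (x1+x2+x3)*(b1^2*x1+b2^2*x2+b3^2*x3) - (b1*x1+b2*x2+b3*x3)^2) by ring.
rewrite H, HT, HS. field.
Qed.

Lemma harm_pt (a1 a2 a3 l1 l2 l3 : R) (u1 u2 u3 : C) :
  a2 + l2 = a1 + l1 -> a3 + l3 = a1 + l1 ->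
  cinner u1 u1 + cinner u2 u2 + cinner u3 u3 = 1 ->
  let L1 := Cplus (Cmult (RtoC a1) u1) (Cmult (RtoC l1) u1) in
  let L2 := Cplus (Cmult (RtoC a2) u2) (Cmult (RtoC l2) u2) in
  let L3 := Cplus (Cmult (RtoC a3) u3) (Cmult (RtoC l3) u3) in
  let k := inner3 L1 L2 L3 u1 u2 u3 in
  Cminus L1 (Cmult (RtoC k) u1) = RtoC 0 /\
  Cminus L2 (Cmult (RtoC k) u2) = RtoC 0 /\
  Cminus L3 (Cmult (RtoC k) u3) = RtoC 0.
Proof.
intros H2 H3 H1. cbv zeta.
assert (Hk : inner3 (Cplus (Cmult (RtoC a1) u1) (Cmult (RtoC l1) u1))
   (Cplus (Cmult (RtoC a2) u2) (Cmult (RtoC l2) u2))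
   (Cplus (Cmult (RtoC a3) u3) (Cmult (RtoC l3) u3)) u1 u2 u3 = a1 + l1).
{ transitivity ((a1+l1)*cinner u1 u1 + (a2+l2)*cinner u2 u2 + (a3+l3)*cinner u3 u3).
  - unfold inner3, cinner; destruct u1, u2, u3; simpl; ring.
  - rewrite H2, H3. transitivity ((a1+l1)*(cinner u1 u1 + cinner u2 u2 + cinner u3 u3)); [ring|].
    rewrite H1; ring. }
rewrite Hk. rewrite <- H2 at 2. rewrite <- H3 at 2.
split; [|split]; Ceq.
Qed.

Theorem proposition8p3 (b1 b2 b3 : R) (w1 w2 w3 : R -> C) :
  ~ (b1 = 0 /\ b2 = 0 /\ b3 = 0) ->
  b1 + b2 + b3 = 0 ->
  (forall t, w1 t <> RtoC 0) ->
  (forall t, w2 t <> RtoC 0) ->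
  (forall t, w3 t <> RtoC 0) ->
  (forall t, is_derive w1 t
     (Cmult (RtoC (/ sqrt 3 * (b3 - b2))) (Cconj (Cmult (w2 t) (w3 t))))) ->
  (forall t, is_derive w2 t
     (Cmult (RtoC (/ sqrt 3 * (b1 - b3))) (Cconj (Cmult (w3 t) (w1 t))))) ->
  (forall t, is_derive w3 t
     (Cmult (RtoC (/ sqrt 3 * (b2 - b1))) (Cconj (Cmult (w1 t) (w2 t))))) ->
  (forall t, Cmod (w1 t) ^ 2 + Cmod (w2 t) ^ 2 + Cmod (w3 t) ^ 2 = 3) ->
  (forall t, b1 * Cmod (w1 t) ^ 2 + b2 * Cmod (w2 t) ^ 2 + b3 * Cmod (w3 t) ^ 2 = 0) ->
  conformal_map (Phi_comp b1 w1) (Phi_comp b2 w2) (Phi_comp b3 w3) /\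
  harmonic_map_S5 (Phi_comp b1 w1) (Phi_comp b2 w2) (Phi_comp b3 w3).
Proof.
intros _ HB _ _ _ D1 D2 D3 HT HS.
pose (w1' := fun t => Cmult (RtoC (/ sqrt 3 * (b3 - b2))) (Cconj (Cmult (w2 t) (w3 t)))).
pose (w2' := fun t => Cmult (RtoC (/ sqrt 3 * (b1 - b3))) (Cconj (Cmult (w3 t) (w1 t)))).
pose (w3' := fun t => Cmult (RtoC (/ sqrt 3 * (b2 - b1))) (Cconj (Cmult (w1 t) (w2 t)))).
change (forall t, is_derive w1 t (w1' t)) in D1.
change (forall t, is_derive w2 t (w2' t)) in D2.
change (forall t, is_derive w3 t (w3' t)) in D3.
pose (w1'' := fun t => Cmult (RtoC (/ sqrt 3 * (b3 - b2)))
   (Cconj (Cplus (Cmult (w2' t) (w3 t)) (Cmult (w2 t) (w3' t))))).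
pose (w2'' := fun t => Cmult (RtoC (/ sqrt 3 * (b1 - b3)))
   (Cconj (Cplus (Cmult (w3' t) (w1 t)) (Cmult (w3 t) (w1' t))))).
pose (w3'' := fun t => Cmult (RtoC (/ sqrt 3 * (b2 - b1)))
   (Cconj (Cplus (Cmult (w1' t) (w2 t)) (Cmult (w1 t) (w2' t))))).
assert (DD1 : forall t, is_derive w1' t (w1'' t)).
{ intros t. unfold w1'. eapply is_derive_val.
  - apply (is_derive_Cmult (fun _ => RtoC (/ sqrt 3 * (b3 - b2))) (fun t => Cconj (Cmult (w2 t) (w3 t)))).
    + apply is_derive_Cconst.
    + apply (is_derive_Cconj (fun t => Cmult (w2 t) (w3 t))). apply is_derive_Cmult; auto.
  - unfold w1''; Ceq. }
assert (DD2 : forall t, is_derive w2' t (w2'' t)).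
{ intros t. unfold w2'. eapply is_derive_val.
  - apply (is_derive_Cmult (fun _ => RtoC (/ sqrt 3 * (b1 - b3))) (fun t => Cconj (Cmult (w3 t) (w1 t)))).
    + apply is_derive_Cconst.
    + apply (is_derive_Cconj (fun t => Cmult (w3 t) (w1 t))). apply is_derive_Cmult; auto.
  - unfold w2''; Ceq. }
assert (DD3 : forall t, is_derive w3' t (w3'' t)).
{ intros t. unfold w3'. eapply is_derive_val.
  - apply (is_derive_Cmult (fun _ => RtoC (/ sqrt 3 * (b2 - b1))) (fun t => Cconj (Cmult (w1 t) (w2 t)))).
    + apply is_derive_Cconst.
    + apply (is_derive_Cconj (fun t => Cmult (w1 t) (w2 t))). apply is_derive_Cmult; auto.
  - unfold w3''; Ceq. }
assert (HT' : forall t, cinner (w1 t) (w1 t) + cinner (w2 t) (w2 t) + cinner (w3 t) (w3 t) = 3).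
{ intros t; rewrite <- !Cmod2; apply HT. }
assert (HS' : forall t, b1 * cinner (w1 t) (w1 t) + b2 * cinner (w2 t) (w2 t) + b3 * cinner (w3 t) (w3 t) = 0).
{ intros t; rewrite <- !Cmod2; apply HS. }
split.
- exists (Fs b1 w1), (Ft b1 w1'), (Fs b2 w2), (Ft b2 w2'), (Fs b3 w3), (Ft b3 w3').
  split; [apply partials; auto|]. split; [apply partials; auto|].
  split; [apply partials; auto|].
  intros s t. unfold inner3, Fs, Ft. rewrite !rot_inner. split.
  + unfold w1', w2', w3', cinner; simpl; ring.
  + assert (E1 : cinner (Cmult (0,b1) (w1 t)) (Cmult (0,b1) (w1 t)) = b1^2 * cinner (w1 t) (w1 t))
      by (unfold cinner; simpl; ring).
    assert (E2 : cinner (Cmult (0,b2) (w2 t)) (Cmult (0,b2) (w2 t)) = b2^2 * cinner (w2 t) (w2 t))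
      by (unfold cinner; simpl; ring).
    assert (E3 : cinner (Cmult (0,b3) (w3 t)) (Cmult (0,b3) (w3 t)) = b3^2 * cinner (w3 t) (w3 t))
      by (unfold cinner; simpl; ring).
    assert (G1 : cinner (w1' t) (w1' t) = /3 * ((b3-b2)^2 * cinner (w2 t) (w2 t) * cinner (w3 t) (w3 t)))
      by (rewrite <- r2; unfold w1', cinner; simpl; ring).
    assert (G2 : cinner (w2' t) (w2' t) = /3 * ((b1-b3)^2 * cinner (w3 t) (w3 t) * cinner (w1 t) (w1 t)))
      by (rewrite <- r2; unfold w2', cinner; simpl; ring).
    assert (G3 : cinner (w3' t) (w3' t) = /3 * ((b2-b1)^2 * cinner (w1 t) (w1 t) * cinner (w2 t) (w2 t)))
      by (rewrite <- r2; unfold w3', cinner; simpl; ring).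
    rewrite E1, E2, E3, G1, G2, G3.
    pose proof (conf_eq b1 b2 b3 _ _ _ (HT' t) (HS' t)) as Hc.
    transitivity (/ sqrt 3 * / sqrt 3 * (b1 ^ 2 * cinner (w1 t) (w1 t) + b2 ^ 2 * cinner (w2 t) (w2 t) +
       b3 ^ 2 * cinner (w3 t) (w3 t))); [ring|].
    rewrite Hc; ring.
- split.
  + intros s t. rewrite !Cmod2. unfold Phi_comp. rewrite !rot_inner, r2.
    pose proof (HT' t). lra.
  + exists (fun s t => Cmult (RtoC (-b1^2)) (Phi_comp b1 w1 s t)), (Ft b1 w1''),
      (fun s t => Cmult (RtoC (-b2^2)) (Phi_comp b2 w2 s t)), (Ft b2 w2''),
      (fun s t => Cmult (RtoC (-b3^2)) (Phi_comp b3 w3 s t)), (Ft b3 w3'').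
    split; [apply (second _ _ w1'); auto|]. split; [apply (second _ _ w2'); auto|].
    split; [apply (second _ _ w3'); auto|].
    intros s t.
    set (x1 := cinner (w1 t) (w1 t)).
    set (x2 := cinner (w2 t) (w2 t)).
    set (x3 := cinner (w3 t) (w3 t)).
    assert (F1 : Ft b1 w1'' s t = Cmult (RtoC (/3*((b3-b2)*(b1-b3)*x3 + (b3-b2)*(b2-b1)*x2))) (Phi_comp b1 w1 s t)).
    { rewrite <- r2; unfold Ft, Phi_comp, w1'', w2', w3', x2, x3, cinner; Ceq. }
    assert (F2 : Ft b2 w2'' s t = Cmult (RtoC (/3*((b1-b3)*(b2-b1)*x1 + (b1-b3)*(b3-b2)*x3))) (Phi_comp b2 w2 s t)).
    { rewrite <- r2; unfold Ft, Phi_comp, w2'', w3', w1', x1, x3, cinner; Ceq. }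
    assert (F3 : Ft b3 w3'' s t = Cmult (RtoC (/3*((b2-b1)*(b3-b2)*x2 + (b2-b1)*(b1-b3)*x1))) (Phi_comp b3 w3 s t)).
    { rewrite <- r2; unfold Ft, Phi_comp, w3'', w1', w2', x1, x2, cinner; Ceq. }
    rewrite F1, F2, F3.
    pose proof (lam_eq b1 b2 b3 x1 x2 x3 HB (HT' t) (HS' t)) as L12.
    assert (HB2 : b2 + b3 + b1 = 0) by lra.
    assert (HT2 : x2 + x3 + x1 = 3) by (pose proof (HT' t); unfold x1, x2, x3 in *; lra).
    assert (HS2 : b2*x2 + b3*x3 + b1*x1 = 0) by (pose proof (HS' t); unfold x1, x2, x3 in *; lra).
    pose proof (lam_eq b2 b3 b1 x2 x3 x1 HB2 HT2 HS2) as L23.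
    apply harm_pt.
    * lra.
    * lra.
    * unfold Phi_comp. rewrite !rot_inner, r2. pose proof (HT' t). unfold x1, x2, x3 in *. lra.
Qed.
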